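(* Fix $\alpha>1$, a Pufferfish scenario $(\mathcal S,\mathcal Q,\Theta)$ and a slice profile $(\mathcal U,\omega)$. If a mechanism $\mathcal M$ satisfies $(\alpha,\epsilon,\omega)$-Joint-SRPP in $(\mathcal S,\mathcal Q,\Theta)$, then for any $\delta\in(0,1)$ it satisfies $(\epsilon',\delta,\omega)$-Joint-SPP in $(\mathcal S,\mathcal Q,\Theta)$ with $\epsilon'=\epsilon+\frac{\log(1/\delta)}{\alpha-1}$.
   Context: Pufferfish scenario: secrets $\mathcal S$, pairs $\mathcal Q\subseteq\mathcal S\times\mathcal S$, priors $\Theta$, each a joint law of secret $S$ and dataset $X$ with secret marginal $P^S_\theta$; $\mathcal M^\theta_s$ is the law of $\mathcal M(X)\in\mathbb R^d$ given $S=s$ under $\theta$. Slice profile: $\mathcal U\subseteq\mathbb S^{d-1}$, $\omega$ a probability measure on the unit sphere supported on $\mathcal U$; $\Psi^u(a)=\langle a,u\rangle$, $\Psi^u_\#$ pushforward. $\mathtt D_\alpha$ is R\'enyi divergence. $\mathcal M$ is $(\alpha,\epsilon,\omega)$-Joint-SRPP if $\frac1{\alpha-1}\log\int\exp((\alpha-1)\mathtt D_\alpha(\Psi^u_\#\mathcal M^\theta_{s_i}\|\Psi^u_\#\mathcal M^\theta_{s_j}))\,d\omega(u)\le\epsilon$ for all $\theta\in\Theta$ and $(s_i,s_j)\in\mathcal Q$ with $P^S_\theta(s_i),P^S_\theta(s_j)>0$. Joint-SPP: let $V\sim\omega$ be independent of $X$ and of the internal randomness of $\mathcal M$, and $\widetilde{\mathcal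 M}(X)=(V,\Psi^V(\mathcal M(X)))$. $\mathcal M$ is $(\varepsilon,\delta,\omega)$-Joint-SPP if for all such $\theta$, $(s_i,s_j)$ and measurable $A$, $\Pr(\widetilde{\mathcal M}(X)\in A\mid s_i,\theta)\le e^\varepsilon\Pr(\widetilde{\mathcal M}(X)\in A\mid s_j,\theta)+\delta$. *)

(* Defs.v *)
From HB Require Import structures.
From mathcomp Require Import all_boot all_order all_algebra.
From mathcomp Require Import all_classical all_reals all_analysis.
Set Implicit Arguments. Unset Strict Implicit. Unset Printing Implicit Defensive.
Import Order.TTheory GRing.Theory Num.Theory.
Local Open Scope classical_set_scope.
Local Open Scope ring_scope.

(* R^n is modelled by n.-tuple R with its product (= Borel) sigma-algebra. *)

Section slices.
Context {R : realType} {n : nat}.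

Definition inner (a u : n.-tuple R) : R := \sum_(i < n) tnth a i * tnth u i.

Definition unit_sphere : set (n.-tuple R) :=
  [set u | \sum_(i < n) tnth u i ^+ 2 = 1].

Definition Psi (u : n.-tuple R) : n.-tuple R -> R := fun a => inner a u.

Lemma measurable_Psi (u : n.-tuple R) : measurable_fun [set: n.-tuple R] (Psi u).
Proof.
rewrite /Psi /inner; apply: measurable_sum => i.
apply: measurable_realfun.measurable_funM; first exact: measurable_tnth.
exact: measurable_cst.
Qed.

Section slice_mfun.
Variable u : n.-tuple R.
HB.instance Definition _ := isMeasurableFun.Build _ _ _ _ (Psi u)
  (measurable_Psi u).
End slice_mfun.

Definition slice_law (u : n.-tuple R) (P : probability (n.-tuple R) R)
  : probability R R := distribution P (Psi u).

End slices.

Local Open Scope ereal_scope.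

Definition renyi_div {d} {T : measurableType d} {R : realType} (alpha : R)
    (P Q : probability T R) : \bar R :=
  if pselect (charge_of_finite_measure P `<< Q) then
    ((alpha - 1)^-1)%:E *
      lne (\int[Q]_x expeR (alpha%:E *
             lne (Radon_Nikodym (charge_of_finite_measure P) Q x)))
  else +oo.

Definition slice_profile {R : realType} {n : nat} (U : set (n.-tuple R))
    (omega : probability (n.-tuple R) R) : Prop :=
  U `<=` unit_sphere /\
  (forall A, measurable A -> A `&` U = set0 -> omega A = 0).

(* A Pufferfish scenario (S, Q, Theta) together with a mechanism M is
   represented by:
     Q      : the set of secret pairs (as a relation on secrets),
     PS     : PS theta s = P^S_theta(s), the secret marginal,
     Mlaw   : Mlaw theta s = M^theta_s, the law of M(X) given S = s under theta. *)

Definition joint_SRPP {R : realType} {n : nat} {Theta Sec : Type}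
    (Q : Sec -> Sec -> Prop) (PS : Theta -> Sec -> R)
    (Mlaw : Theta -> Sec -> probability (n.-tuple R) R)
    (omega : probability (n.-tuple R) R) (alpha eps : R) : Prop :=
  forall (theta : Theta) (si sj : Sec), Q si sj ->
    (0 < PS theta si)%R -> (0 < PS theta sj)%R ->
    ((alpha - 1)^-1)%:E *
      lne (\int[omega]_u expeR ((alpha - 1)%:E *
             renyi_div alpha (slice_law u (Mlaw theta si))
                             (slice_law u (Mlaw theta sj))))
    <= eps%:E.

(* Law of Mtilde(X) = (V, Psi^V(M(X))) given S = s, where V ~ omega is
   independent of X and of the mechanism's randomness: the image of the
   product law omega (x) M^theta_s under (u, a) |-> (u, <a, u>). *)
Definition sliced_law {R : realType} {n : nat}
    (omega : probability (n.-tuple R) R) (P : probability (n.-tuple R) R)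
    : set (n.-tuple R * R) -> \bar R :=
  fun A => (omega \x P) ((fun p : n.-tuple R * n.-tuple R =>
                            (p.1, Psi p.1 p.2)) @^-1` A).

Definition joint_SPP {R : realType} {n : nat} {Theta Sec : Type}
    (Q : Sec -> Sec -> Prop) (PS : Theta -> Sec -> R)
    (Mlaw : Theta -> Sec -> probability (n.-tuple R) R)
    (omega : probability (n.-tuple R) R) (eps delta : R) : Prop :=
  forall (theta : Theta) (si sj : Sec), Q si sj ->
    (0 < PS theta si)%R -> (0 < PS theta sj)%R ->
    forall A : set (n.-tuple R * R), measurable A ->
      sliced_law omega (Mlaw theta si) A <=
        (expR eps)%:E * sliced_law omega (Mlaw theta sj) A + delta%:E.

(* Main.v *)
Require Import Defs.
From HB Require Import structures.
From mathcomp Require Import all_boot all_order all_algebra.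
From mathcomp Require Import all_classical all_reals all_analysis.
From mathcomp Require Import measurable_realfun.
From mathcomp Require Import ring lra.
Import Order.TTheory GRing.Theory Num.Theory.
Local Open Scope classical_set_scope.
Local Open Scope ring_scope.

Section pt.
Local Open Scope ereal_scope.
Context (R : realType).

Lemma pt_bound (alpha a : R) (x : \bar R) : (1 < alpha)%R -> x \is a fin_num ->
  (expR ((alpha - 1) * a))%:E * maxe (x - (expR a)%:E) 0
   <= expeR (alpha%:E * lne x).
Proof.
move=> a1; case: x => // r _.
have [rle|rgt] := leP r (expR a).
  rewrite (_ : maxe _ _ = 0); first by rewrite mule0 expeR_ge0.
  by apply/max_idPr; rewrite sube_le0 lee_fin.
have r0 : (0 < r)%R by apply: lt_trans rgt; exact: expR_gt0.
rewrite /= (leNgt r 0%R) r0 /= -EFin_max -EFinM /= lee_fin.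
have -> : (Num.max (r - expR a) 0 = r - expR a)%R.
  by apply/max_idPl; rewrite subr_ge0 ltW.
have al : (a < ln r)%R by rewrite -ltr_expR lnK.
have -> : (alpha * ln r = ln r + (alpha - 1) * ln r)%R by ring.
rewrite expRD lnK ?posrE//.
have : (expR ((alpha - 1) * a) <= expR ((alpha - 1) * ln r))%R.
  by rewrite ler_expR ler_pM2l ?subr_gt0// ltW.
have := expR_gt0 ((alpha - 1) * a); have := expR_gt0 a.
nra.
Qed.
End pt.

Section inner.
Local Open Scope ereal_scope.
Context d (T : measurableType d) (R : realType).
Variable mu : {measure set T -> \bar R}.
Import HBNNSimple.

Lemma inner_le_integral (f1 f2 : T -> \bar R) :
  (forall x, 0 <= f1 x) -> measurable_fun [set: T] f1 ->
  (forall x, f1 x <= f2 x) ->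
  \int[mu]_x f1 x <= \int[mu]_x f2 x.
Proof.
move=> h10 mh1 h12.
have h20 x : 0 <= f2 x by apply: le_trans (h12 x).
pose g1 := nnsfun_approx measurableT mh1.
rewrite (@nd_ge0_integral_lim _ _ _ _ _ g1)//; last 2 first.
  by move=> x m n mn; exact/lefP/nd_nnsfun_approx.
  by move=> x; exact: cvg_nnsfun_approx.
apply: lime_le.
  by apply: is_cvg_sintegral => // t m n mn; exact/lefP/nd_nnsfun_approx.
near=> n; rewrite ge0_integralTE//; apply: ereal_sup_ubound => /=.
exists (g1 n) => // t; rewrite (le_trans _ (h12 _))//.
have cv := @cvg_nnsfun_approx _ _ _ _ measurableT _ mh1 (fun x _ => h10 x) t Logic.I.
rewrite -(cvg_lim _ cv)//; apply: lime_ge; first by apply/cvg_ex; eexists; exact: cv.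
near=> m; rewrite /= lee_fin; apply/lefP/nd_nnsfun_approx; near: m; exact: nbhs_infty_ge.
Unshelve. all: by end_near. Qed.

End inner.

Section slice.
Local Open Scope ereal_scope.
Context d (T : measurableType d) (R : realType).

Lemma slice_bound (alpha a : R) (mu nu : probability T R) (B : set T) :
  (1 < alpha)%R -> measurable B ->
  (expR ((alpha - 1) * a))%:E * maxe (mu B - (expR a)%:E * nu B) 0
   <= expeR ((alpha - 1)%:E * renyi_div alpha mu nu).
Proof.
move=> a1 mB; rewrite /renyi_div; case: pselect => [ac|nac]; last first.
  by rewrite gt0_muley ?lte_fin ?subr_gt0// leey.
set rho := Radon_Nikodym _ _.
have intr : nu.-integrable [set: T] rho := Radon_Nikodym_integrable ac.
have mrho : measurable_fun [set: T] rho := measurable_int _ intr.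
set I := \int[nu]_x _.
have I0 : 0 <= I by apply: integral_ge0 => x _; exact: expeR_ge0.
rewrite muleA -EFinM mulfV ?mul1e; last by rewrite subr_eq0 gt_eqF.
rewrite lneK; last by rewrite in_itv /= I0 leey.
set e := expR a.
have e0 : (0 < e)%R by exact: expR_gt0.
pose k := (fun x => rho x - e%:E)^\+.
have mk : measurable_fun [set: T] k.
  by apply: measurable_funepos; apply: emeasurable_funB => //; exact: measurable_cst.
have k0 x : 0 <= k x by exact: funepos_ge0.
have step1 : maxe (mu B - e%:E * nu B) 0 <= \int[nu]_x k x.
  rewrite ge_max integral_ge0 ?andbT; last by move=> x _.
  rewrite leeBlDl; last by rewrite fin_numM// fin_num_measure.
  have -> : mu B = charge_of_finite_measure mu B by [].
  rewrite (Radon_Nikodym_integral ac mB) -/rho integralE.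
  apply: le_trans (geeDl _ _) _.
    by rewrite oppe_le0; apply: integral_ge0 => x _; exact: funeneg_ge0.
  apply: (@le_trans _ _ (\int[nu]_(x in B) (e%:E + k x))).
    apply: ge0_le_integral; first exact: mB.
    - by move=> x _; exact: funepos_ge0.
    - by apply: measurable_funepos; exact: (measurable_funS measurableT (@subsetT _ B) mrho).
    - by apply: emeasurable_funD; [exact: measurable_cst | exact: (measurable_funS measurableT (@subsetT _ B) mk)].
    move=> x _; rewrite /k !funeposE.
    have := Radon_Nikodym_fin_num x ac; rewrite -/rho.
    case: (rho x) => // r _.
    rewrite -EFinB -!EFin_max -EFinD lee_fin.
    have m1 : (r - e <= Num.max (r - e) 0)%R by rewrite le_max lexx.
    have m2 : (0 <= Num.max (r - e) 0)%R by rewrite le_max lexx orbT.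
    by rewrite ge_max; apply/andP; split; lra.
  rewrite ge0_integralD//; last 2 first.
    by move=> x _; rewrite lee_fin ltW.
    exact: (measurable_funS measurableT (@subsetT _ B) mk).
  rewrite integral_cst// leeD2l//.
  by apply: ge0_subset_integral.
apply: (@le_trans _ _ ((expR ((alpha - 1) * a))%:E * \int[nu]_x k x)).
  apply: lee_pmul; [by rewrite lee_fin expR_ge0 | by rewrite le_max lexx orbT | exact: lexx | exact: step1].
rewrite -ge0_integralZl_EFin//.
apply: inner_le_integral.
- by move=> x; apply: mule_ge0 => //; rewrite lee_fin expR_ge0.
- exact: measurable_funeM.
move=> x; rewrite /k funeposE; apply: pt_bound => //.
exact: Radon_Nikodym_fin_num.
Qed.
End slice.

Lemma measurable_slicemap (R : realType) (n : nat) :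
  measurable_fun [set: n.-tuple R * n.-tuple R]
    (fun p : n.-tuple R * n.-tuple R => (p.1, Psi p.1 p.2)).
Proof.
apply: measurable_fun_pair; first exact: measurable_fst.
rewrite /Psi /inner; apply: measurable_sum => i.
apply: measurable_realfun.measurable_funM.
  exact: measurableT_comp (measurable_tnth i) measurable_snd.
exact: measurableT_comp (measurable_tnth i) measurable_fst.
Qed.

Section main.
Local Open Scope ereal_scope.
Context (R : realType) (n : nat).

Lemma lne_bound {alpha eps : R} {I : \bar R} : (1 < alpha)%R -> 0 <= I ->
  ((alpha - 1)^-1)%:E * lne I <= eps%:E -> I <= (expR ((alpha - 1) * eps))%:E.
Proof.
move=> a1; case: I => [r| |] //= r0; last first.
  by rewrite gt0_muley ?lte_fin ?invr_gt0 ?subr_gt0.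
have [rle|rgt] := leP r 0%R.
  by move=> _; rewrite lee_fin (le_trans rle)// expR_ge0.
rewrite -EFinM lee_fin => h; rewrite lee_fin -[X in (X <= _)%R](lnK rgt) ler_expR.
have a0 : (0 < alpha - 1)%R by rewrite subr_gt0.
by rewrite -ler_pdivrMl.
Qed.

Lemma main_ineq (omega Pi Pj : probability (n.-tuple R) R) (alpha eps delta : R)
    (A : set (n.-tuple R * R)) :
  (1 < alpha)%R -> (0 < delta)%R -> measurable A ->
  ((alpha - 1)^-1)%:E *
      lne (\int[omega]_u expeR ((alpha - 1)%:E *
             renyi_div alpha (slice_law u Pi) (slice_law u Pj)))
    <= eps%:E ->
  sliced_law omega Pi A <=
    (expR (eps + ln (delta^-1) / (alpha - 1)))%:E * sliced_law omega Pj A + delta%:E.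
Proof.
move=> a1 d0 mA H.
set a := (eps + ln (delta^-1) / (alpha - 1))%R.
pose f := fun p : n.-tuple R * n.-tuple R => (p.1, Psi p.1 p.2).
have mE : measurable (f @^-1` A).
  by rewrite -[f @^-1` A]setTI; exact: measurable_slicemap.
have secE u : xsection (f @^-1` A) u = Psi u @^-1` xsection A u.
  by apply/seteqP; split => y; rewrite /xsection /preimage /= !inE.
rewrite /sliced_law /product_measure1 /= -/f.
set p := (fun u => Pi (xsection (f @^-1` A) u)).
set q := (fun u => Pj (xsection (f @^-1` A) u)).
have mp : measurable_fun [set: n.-tuple R] p by exact: measurable_fun_xsection.
have mq : measurable_fun [set: n.-tuple R] q by exact: measurable_fun_xsection.
have p0 u : 0 <= p u by [].
have q0 u : 0 <= q u by [].
have pfin u : p u \is a fin_num by apply: fin_num_measure; exact: measurable_xsection.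
have qfin u : q u \is a fin_num by apply: fin_num_measure; exact: measurable_xsection.
pose h := (fun u => p u - (expR a)%:E * q u)^\+.
have mh : measurable_fun [set: n.-tuple R] h.
  by apply: measurable_funepos; apply: emeasurable_funB => //; exact: measurable_funeM.
have h0 u : 0 <= h u by exact: funepos_ge0.
have e0 : (0 <= expR a)%R by exact: expR_ge0.
have step1 : \int[omega]_u p u <=
    (expR a)%:E * \int[omega]_u q u + \int[omega]_u h u.
  rewrite -ge0_integralZl_EFin// -ge0_integralD//; last first.
    by apply: measurable_funeM.
    by move=> u _; apply: mule_ge0.
  apply: ge0_le_integral => //.
    by apply: emeasurable_funD => //; apply: measurable_funeM.
  move=> u _; rewrite /h funeposE -leeBlDl; first by rewrite le_max lexx.
  by rewrite fin_numM.
have step2 : (expR ((alpha - 1) * a))%:E * \int[omega]_u h u <=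
    (expR ((alpha - 1) * eps))%:E.
  rewrite -ge0_integralZl_EFin//.
  apply: (le_trans _ (lne_bound a1 _ H)); last first.
    by apply: integral_ge0 => u _; exact: expeR_ge0.
  apply: inner_le_integral.
  - by move=> u; apply: mule_ge0 => //; rewrite lee_fin expR_ge0.
  - exact: measurable_funeM.
  move=> u; rewrite /h funeposE /p /q secE.
  exact: slice_bound a1 (measurable_xsection _ mA).
have hle : \int[omega]_u h u <= delta%:E.
  have -> : \int[omega]_u h u = (expR (- ((alpha - 1) * a)))%:E *
      ((expR ((alpha - 1) * a))%:E * \int[omega]_u h u).
    by rewrite muleA -EFinM -expRD addNr expR0 mul1e.
  apply: le_trans (lee_pmul _ _ (lexx _) step2) _.
  - by rewrite lee_fin expR_ge0.
  - by apply: mule_ge0; [rewrite lee_fin expR_ge0 | apply: integral_ge0].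
  rewrite -EFinM -expRD lee_fin.
  have -> : (- ((alpha - 1) * a) + (alpha - 1) * eps = ln delta)%R.
    rewrite /a lnV ?posrE//; field; by rewrite subr_eq0 gt_eqF.
  by rewrite lnK ?posrE.
apply: le_trans step1 _.
exact: leeD2l.
Qed.
End main.


Theorem theorem9 (R : realType) (alpha : R) (n : nat)
    (Theta Sec : Type) (Q : Sec -> Sec -> Prop) (PS : Theta -> Sec -> R)
    (U : set (n.-tuple R)) (omega : probability (n.-tuple R) R)
    (Mlaw : Theta -> Sec -> probability (n.-tuple R) R) (eps : R) :
  1 < alpha ->
  slice_profile U omega ->
  joint_SRPP Q PS Mlaw omega alpha eps ->
  forall delta : R, 0 < delta < 1 ->
    joint_SPP Q PS Mlaw omega (eps + ln (delta^-1) / (alpha - 1)) delta.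
Proof.
move=> a1 _ hS delta /andP[d0 d1] theta si sj Qij Pi0 Pj0 A mA.
exact: main_ineq a1 d0 mA (hS theta si sj Qij Pi0 Pj0).
Qed.
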